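(* Let $n\ge 3$ and let $(\alpha,\beta)$ satisfy $\beta\ge 0$, $0<\alpha+\beta<n-\beta$ and $\frac{n-\alpha-2\beta}{2n}+\frac{n-\alpha}{2(n-1)}<1$. Then, as $|\xi|\to1^-$ (i.e. for all $\xi\in\mathbb B^n$ with $|\xi|$ sufficiently close to $1$, with a constant depending only on $n,\alpha,\beta$), $$d_{\alpha,\beta}(\xi)\lesssim\begin{cases}(1-|\xi|)^\beta,&\alpha>1,\\ (1-|\xi|)^\beta\log\frac1{1-|\xi|},&\alpha=1,\\ (1-|\xi|)^{\alpha+\beta-1},&\alpha<1.\end{cases}$$
   Context: $d_{\alpha,\beta}(\xi)=\frac{\pi^{n/2}2^{1-\beta}}{\Gamma(n/2)}(1-|\xi|^2)^{\alpha+\beta-1}F\big(\frac{n+\alpha}{2}-1,\frac\alpha2;\frac n2;|\xi|^2\big)$ for $\xi$ in the open unit ball $\mathbb B^n$, where $F$ is the Gauss hypergeometric function; equivalently $d_{\alpha,\beta}(\xi)=\left(\frac{1-|\xi|^2}{2}\right)^\beta\int_{\mathbb S^{n-1}}|\xi-\eta|^{\alpha-n}\mathrm dV(\eta)$. *)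

(* Defs.v *)
From HB Require Import structures.
From mathcomp Require Import all_boot all_order all_algebra.
From mathcomp Require Import all_classical all_reals all_analysis.
Set Implicit Arguments. Unset Strict Implicit. Unset Printing Implicit Defensive.
Import Order.TTheory GRing.Theory Num.Theory.
Import numFieldNormedType.Exports.
Local Open Scope classical_set_scope.
Local Open Scope ring_scope.

Definition Gamma {R : realType} (s : R) : R :=
  Rintegral (@lebesgue_measure R) `]0, +oo[%classic
    (fun t : R => t `^ (s - 1) * expR (- t)).

Definition poch {R : realType} (a : R) (k : nat) : R :=
  \prod_(i < k) (a + i%:R).

Definition hypF {R : realType} (a b c x : R) : R :=
  limn (series (fun k : nat => poch a k * poch b k / (poch c k * (k`!)%:R) * x ^+ k)).

Definition enorm {R : realType} {n : nat} (xi : 'rV[R]_n) : R :=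
  Num.sqrt (\sum_(i < n) xi 0 i ^+ 2).

Definition d_ab {R : realType} (n : nat) (alpha beta : R) (xi : 'rV[R]_n) : R :=
  pi `^ (n%:R / 2) * 2 `^ (1 - beta) / Gamma (n%:R / 2 : R)
  * (1 - enorm xi ^+ 2) `^ (alpha + beta - 1)
  * hypF ((n%:R + alpha) / 2 - 1) (alpha / 2) (n%:R / 2) (enorm xi ^+ 2).
Arguments d_ab {R} n alpha beta xi.

(* Main.v *)
Require Import Defs.
From HB Require Import structures.
From mathcomp Require Import all_boot all_order all_algebra.
From mathcomp Require Import all_classical all_reals all_analysis.
From mathcomp Require Import ring lra.
Import Order.TTheory GRing.Theory Num.Theory.
Import numFieldNormedType.Exports.
Local Open Scope classical_set_scope.
Local Open Scope ring_scope.
Section S.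
Context {R : realType}.
Lemma is_derive_comp1 (f g : R -> R) (x df dg : R) :
  is_derive x 1 f df -> is_derive (f x) 1 g dg -> is_derive x 1 (g \o f) (dg * df).
Proof.
move=> [fd fv] [gd gv]; split.
  apply/derivable1_diffP; apply: differentiable_comp; exact/derivable1_diffP.
by rewrite -derive1E derive1_comp // !derive1E fv gv.
Qed.

Lemma pochS (a : R) k : poch a k.+1 = poch a k * (a + k%:R).
Proof. by rewrite /poch big_ord_recr. Qed.

Definition eP (p : R) k := poch p k / (k`!)%:R.
Definition PS (p : R) N (x : R) := \sum_(k < N) eP p k * x ^+ k.
Definition DS (p : R) N (x : R) := \sum_(k < N) eP p k * (p + k%:R) * x ^+ k.

Lemma ePS p k : eP p k.+1 * k.+1%:R = eP p k * (p + k%:R).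
Proof.
rewrite /eP pochS factS natrM.
have h1 : (k`!)%:R != 0 :> R by rewrite pnatr_eq0 -lt0n fact_gt0.
have h2 : k.+1%:R != 0 :> R by rewrite pnatr_eq0.
by field; apply/andP; split.
Qed.

Lemma mono_derive (k : R) m (x : R) :
  is_derive x 1 (fun y => k * y ^+ m) (k * (m%:R * x ^+ m.-1)).
Proof.
have H := is_deriveZ k (is_deriveX m (@is_derive_id R R x 1)).
move: H; rewrite exprfctE.
have -> : (k \*: (GRing.exp (R:=R))^~ m) = (fun y => k * y ^+ m) by rewrite funeqE.
move=> H; apply: is_derive_eq.
by rewrite [_%:A]mulr1.
Qed.

Lemma PS_derive (p : R) N (x : R) : is_derive x 1 (PS p N.+1) (DS p N x).
Proof.
elim: N => [|N IH].
  have -> : PS p 1 = cst 1.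
    by rewrite funeqE => y; rewrite /PS big_ord1 /eP /poch big_ord0 expr0 mulr1 fact0 invr1 mulr1.
  by rewrite /DS big_ord0; exact: is_derive_cst.
have -> : PS p N.+2 = PS p N.+1 + (fun y => eP p N.+1 * y ^+ N.+1).
  by rewrite funeqE => y; rewrite /PS big_ord_recr.
rewrite [DS p N.+1 x]/DS big_ord_recr /= -/(DS p N x).
apply: is_deriveD.
apply: (is_derive_eq (mono_derive _ _ _)).
by rewrite /= mulrA ePS.
Qed.
Lemma eP0 (p : R) : eP p 0 = 1.
Proof. by rewrite /eP /poch big_ord0 fact0 invr1 mulr1. Qed.

Lemma eP_ge0 (p : R) k : 0 <= p -> 0 <= eP p k.
Proof.
move=> p0; rewrite /eP divr_ge0 // /poch; apply: prodr_ge0 => i _.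
by rewrite addr_ge0.
Qed.

Lemma DS_ident (p : R) N (x : R) :
  (1 - x) * DS p N x - p * PS p N.+1 x = - (eP p N * (p + N%:R) * x ^+ N).
Proof.
elim: N => [|N IH].
  by rewrite /DS /PS big_ord0 big_ord1 eP0 !expr0; ring.
rewrite /DS /PS big_ord_recr [in X in _ - X]big_ord_recr /= -/(DS p N x) -/(PS p N.+1 x).
transitivity ((1 - x) * DS p N x - p * PS p N.+1 x +
  ((1 - x) * (eP p N * (p + N%:R) * x ^+ N) - p * (eP p N.+1 * x ^+ N.+1))).
  by ring.
rewrite IH -ePS exprS -natr1; ring.
Qed.

Lemma one_minus_derive (y : R) : is_derive y 1 (fun z : R => 1 - z) (-1).
Proof.
have -> : (fun z : R => 1 - z) = cst 1 - id by rewrite funeqE.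
apply: is_derive_eq.
by rewrite sub0r.
Qed.

Lemma phi_derive (p : R) N (y : R) : 0 < p -> y < 1 ->
  is_derive y 1 (fun z => (1 - z) `^ p * PS p N.+1 z)
    ((1 - y) `^ (p - 1) * - (eP p N * (p + N%:R) * y ^+ N)).
Proof.
move=> p0 y1.
have h1 : is_derive y 1 ((@powR R ^~ p) \o (fun z : R => 1 - z)) ((p * (1 - y) `^ (p - 1)) * (-1)).
  apply: is_derive_comp1; first exact: one_minus_derive.
  by apply: is_derive1_powR; rewrite subr_gt0.
have h2 := is_deriveM h1 (PS_derive p N y).
have -> : (fun z => (1 - z) `^ p * PS p N.+1 z) = ((@powR R ^~ p) \o (fun z : R => 1 - z)) * PS p N.+1.
  by rewrite funeqE.
apply: (is_derive_eq h2).
rewrite /= -DS_ident -(mulr_powRB1 _ p0); last by rewrite subr_ge0 ltW.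
rewrite /GRing.scale /=; ring.
Qed.

Lemma PS_bound (p : R) N (x : R) : 0 < p -> 0 <= x -> x < 1 ->
  PS p N x <= (1 - x) `^ (- p).
Proof.
move=> p0 x0 x1.
case: N => [|N]; first by rewrite /PS big_ord0 powR_ge0.
set phi := fun z => (1 - z) `^ p * PS p N.+1 z.
have hd : forall y, y < 1 -> derivable phi y 1.
  by move=> y y1; have [] := phi_derive p N y p0 y1.
have key : phi x <= phi 0.
  have hc : {within `[0, x], continuous phi}.
    apply: derivable_within_continuous => y; rewrite in_itv /= => /andP[_ yx].
    by apply: hd; apply: le_lt_trans x1.
  apply: (ler0_derive1_le_cc _ _ hc); last exact: x0.
  - by move=> y; rewrite in_itv /= => /andP[_ yx]; apply: hd; apply: lt_trans x1.
  - move=> y; rewrite in_itv /= => /andP[y0 yx].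
    have y1 : y < 1 by apply: lt_trans x1.
    have H := phi_derive p N y p0 y1.
    rewrite derive1E (@derive_val _ _ _ _ _ _ _ H).
    rewrite mulrN oppr_le0 mulr_ge0 ?powR_ge0 // mulr_ge0 ?exprn_ge0 ?(ltW y0) //.
    by rewrite mulr_ge0 ?eP_ge0 ?(ltW p0) // addr_ge0 ?(ltW p0).
  - by rewrite ?inE /= subitvE /= !bnd_simp x0.
  - by rewrite ?inE /= ?subitvE /= ?bnd_simp ?x0 ?lexx.
have phi0 : phi 0 = 1.
  rewrite /phi subr0 powR1 mul1r /PS big_ord_recl big1 ?addr0 => [|i _].
    by rewrite eP0 expr0 mulr1.
  by rewrite /= expr0n mulr0.
move: key; rewrite phi0 /phi => key.
have hpos : 0 < (1 - x) `^ p by apply: powR_gt0; rewrite subr_gt0.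
by rewrite powRN -div1r ler_pdivlMr // mulrC.
Qed.
Lemma decr_deriv (f df : R -> R) (x : R) : 0 <= x ->
  (forall y, 0 <= y -> y <= x -> is_derive y 1 f (df y)) ->
  (forall y, 0 < y -> y < x -> df y <= 0) -> f x <= f 0.
Proof.
move=> x0 hd hneg.
have hc : {within `[0, x], continuous f}.
  apply: derivable_within_continuous => y; rewrite in_itv /= => /andP[y0 yx].
  by have [] := hd y y0 yx.
apply: (ler0_derive1_le_cc _ _ hc); last exact: x0.
- move=> y; rewrite in_itv /= => /andP[y0 yx].
  by have [] := hd y (ltW y0) (ltW yx).
- move=> y; rewrite in_itv /= => /andP[y0 yx].
  have H := hd y (ltW y0) (ltW yx).
  by rewrite derive1E (@derive_val _ _ _ _ _ _ _ H); apply: hneg.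
- by rewrite ?inE /= subitvE /= !bnd_simp x0.
- by rewrite ?inE /= ?subitvE /= ?bnd_simp ?x0 ?lexx.
Qed.

Definition LS N (y : R) := \sum_(k < N) (k.+1%:R)^-1 * y ^+ k.+1.
Definition GS N (y : R) := \sum_(k < N) y ^+ k.

Lemma LS_derive N (y : R) : is_derive y 1 (LS N) (GS N y).
Proof.
elim: N => [|N IH].
  have -> : LS 0 = cst 0 by rewrite funeqE => z; rewrite /LS big_ord0.
  by rewrite /GS big_ord0; exact: is_derive_cst.
have -> : LS N.+1 = LS N + (fun z => (N.+1%:R)^-1 * z ^+ N.+1).
  by rewrite funeqE => z; rewrite /LS big_ord_recr.
rewrite [GS N.+1 y]/GS big_ord_recr /= -/(GS N y).
apply: is_deriveD.
apply: (is_derive_eq (mono_derive _ _ _)).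
by rewrite /= mulrA mulVf ?mul1r // pnatr_eq0.
Qed.

Lemma GS_ident N (y : R) : (1 - y) * GS N y = 1 - y ^+ N.
Proof.
elim: N => [|N IH]; first by rewrite /GS big_ord0 expr0; ring.
rewrite /GS big_ord_recr /= mulrDr -/(GS N y) IH exprS; ring.
Qed.

Lemma LS_bound N (x : R) : 0 <= x -> x < 1 -> LS N x <= - ln (1 - x).
Proof.
move=> x0 x1.
set psi := LS N + (@ln R \o (fun z : R => 1 - z)).
have hd : forall y, 0 <= y -> y <= x ->
    is_derive y 1 psi (GS N y + ((1 - y)^-1 * -1)).
  move=> y y0 yx; apply: (is_deriveD (LS_derive N y)).
  apply: is_derive_comp1; first exact: one_minus_derive.
  by apply: is_derive1_ln; rewrite subr_gt0; apply: le_lt_trans x1.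
have := @decr_deriv psi (fun y => GS N y + ((1 - y)^-1 * -1)) x x0 hd.
have psi0 : psi 0 = 0.
  change (LS N 0 + ln (1 - 0) = 0).
  by rewrite subr0 ln1 addr0 /LS big1 // => i _; rewrite expr0n mulr0.
rewrite psi0 => H.
suff : LS N x + ln (1 - x) <= 0 by rewrite -lerBrDr sub0r.
apply: H => y y0 yx.
have y1 : y < 1 by apply: lt_trans x1.
have h1y : 0 < 1 - y by rewrite subr_gt0.
rewrite mulrN1 subr_le0 -(ler_pM2l h1y) GS_ident mulfV ?gt_eqF //.
by rewrite gerBl exprn_ge0 // ltW.
Qed.
Lemma poch_gt0 (a : R) k : 0 < a -> 0 < poch a k.
Proof.
move=> a0; rewrite /poch; apply: prodr_gt0 => i _.
by rewrite ltr_wpDr.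
Qed.

Ltac side_nz := repeat (apply/andP; split);
  first [ by rewrite gt_eqF //; lra
        | by rewrite gt_eqF // poch_gt0 //; lra
        | by rewrite pnatr_eq0 -lt0n fact_gt0
        | by rewrite gt_eqF ].
Definition eQ (q : R) k := (k`!)%:R / poch (1 + q) k.+1.
Definition wQ (q : R) k := (k`!)%:R / poch (1 + q) k.

Lemma eQ_gt0 (q : R) k : 0 <= q -> 0 < eQ q k.
Proof.
move=> q0; rewrite /eQ divr_gt0 ?ltr0n ?fact_gt0 // poch_gt0 //.
lra.
Qed.

Lemma wQ_tel (q : R) k : 0 <= q -> wQ q k - wQ q k.+1 = q * eQ q k.
Proof.
move=> q0.
have p0 : poch (1 + q) k != 0 by rewrite gt_eqF // poch_gt0 //; lra.
have p1 : 1 + q + k%:R != 0 by rewrite gt_eqF // ltr_wpDr //; lra.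
rewrite /wQ /eQ !pochS factS natrM -natr1.
by field; rewrite p0 p1.
Qed.

Lemma eQ_sum (q : R) N : 0 < q -> \sum_(k < N) eQ q k <= q^-1.
Proof.
move=> q0.
have -> : \sum_(k < N) eQ q k = q^-1 * \sum_(k < N) (wQ q k - wQ q k.+1).
  rewrite mulr_sumr; apply: eq_bigr => k _.
  by rewrite wQ_tel ?ltW // mulrA mulVf ?mul1r // gt_eqF.
rewrite -(big_mkord xpredT (fun k => wQ q k - wQ q k.+1)).
have -> : \sum_(0 <= k < N) (wQ q k - wQ q k.+1) = wQ q 0 - wQ q N.
  transitivity (- \sum_(0 <= k < N) (wQ q k.+1 - wQ q k)).
    by rewrite -sumrN; apply: eq_bigr => k _; rewrite opprB.
  by rewrite telescope_sumr // opprB.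
have w0 : wQ q 0 = 1 by rewrite /wQ /poch big_ord0 fact0 divr1.
have wN : 0 <= wQ q N.
  by rewrite /wQ divr_ge0 // ltW // poch_gt0 //; lra.
rewrite w0 -[X in _ <= X]mulr1 ler_wpM2l ?invr_ge0 ?(ltW q0) //; lra.
Qed.

Lemma expR_ge1 (t : R) : 0 <= t -> 1 <= expR t.
Proof. by move=> t0; apply: le_trans (expR_ge1Dx t); rewrite lerDl. Qed.

Lemma dominate (c e : nat -> R) (K0 : nat) (D : R) :
  (forall k, 0 < e k) -> 0 <= D -> (0 < K0)%N ->
  (forall k, (K0 <= k)%N ->
     `|c k.+1| / e k.+1 <= `|c k| / e k * (1 + D / (k%:R * (k%:R + 1)))) ->
  exists M, 0 <= M /\ forall k, `|c k| <= M * e k.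
Proof.
move=> e0 D0 K0pos hr.
pose Phi k := `|c k| / e k * expR (D / k%:R).
have Phi0 k : 0 <= Phi k by rewrite /Phi mulr_ge0 ?divr_ge0 ?expR_ge0 // (ltW (e0 k)).
have Phi_ge k : `|c k| / e k <= Phi k.
  by rewrite /Phi ler_peMr ?divr_ge0 ?(ltW (e0 k)) // expR_ge1 // divr_ge0.
have step k : (K0 <= k)%N -> Phi k.+1 <= Phi k.
  move=> hk.
  have kpos : 0 < k%:R :> R by rewrite ltr0n (leq_trans K0pos hk).
  rewrite /Phi.
  apply: le_trans (ler_wpM2r (expR_ge0 _) (hr k hk)) _.
  rewrite -(mulrA (`|c k| / e k)) ler_wpM2l ?divr_ge0 ?(ltW (e0 k)) //.
  apply: le_trans (ler_wpM2r (expR_ge0 _) (expR_ge1Dx _)) _.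
  rewrite -expRD.
  have -> : D / (k%:R * (k%:R + 1)) + D / k.+1%:R = D / k%:R.
    rewrite -natr1; field.
    by rewrite gt_eqF //= gt_eqF // ltr_wpDl // ltW.
  by [].
have stepK m : Phi (K0 + m)%N <= Phi K0.
  elim: m => [|m IH]; first by rewrite addn0.
  by rewrite addnS; apply: le_trans IH; apply: step; rewrite leq_addr.
exists (\sum_(j < K0.+1) Phi j); split; first by rewrite sumr_ge0.
move=> k; rewrite -ler_pdivrMr //.
apply: le_trans (Phi_ge k) _.
have hle j : (j < K0.+1)%N -> Phi j <= \sum_(j < K0.+1) Phi j.
  move=> hj; rewrite (bigD1 (Ordinal hj)) //= lerDl sumr_ge0 //.
case: (leqP k K0) => hk; first exact: hle.
have -> : k = (K0 + (k - K0))%N by rewrite subnKC // ltnW.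
by apply: le_trans (stepK _) (hle _ _).
Qed.
Definition cf (a b c : R) k := poch a k * poch b k / (poch c k * (k`!)%:R).

Lemma cfS (a b c : R) k : 0 < c ->
  cf a b c k.+1 = cf a b c k * ((a + k%:R) * (b + k%:R) / ((c + k%:R) * k.+1%:R)).
Proof.
move=> c0.
have h1 : poch c k != 0 by rewrite gt_eqF // poch_gt0.
have h2 : c + k%:R != 0 by rewrite gt_eqF // ltr_pwDl // ler0n.
have h3 : (k`!)%:R != 0 :> R by rewrite pnatr_eq0 -lt0n fact_gt0.
have h4 : k.+1%:R != 0 :> R by rewrite pnatr_eq0.
rewrite /cf !pochS factS natrM.
have h5 : 1 + k%:R != 0 :> R by rewrite addrC natr1 pnatr_eq0.
by field; rewrite h5 h2 h3 h1.
Qed.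

Lemma cf_ratio (a b c : R) k : 0 < c -> 0 <= a + k%:R -> 0 <= b + k%:R ->
  `|cf a b c k.+1| = `|cf a b c k| * ((a + k%:R) * (b + k%:R) / ((c + k%:R) * k.+1%:R)).
Proof.
move=> c0 ha hb; rewrite cfS // normrM; congr (_ * _).
apply: ger0_norm; rewrite divr_ge0 ?mulr_ge0 //; rewrite ltW // ltr_pwDl // ler0n.
Qed.

Lemma ratio_P (a b c p : R) k : a + b = c + p -> 1 <= c -> 0 < p -> (1 <= k)%N ->
  0 <= a + k%:R -> 0 <= b + k%:R ->
  `|cf a b c k.+1| / eP p k.+1 <=
  `|cf a b c k| / eP p k * (1 + `|a * b - c * p| / (k%:R * (k%:R + 1))).
Proof.
move=> hab c1 p0 k1 ha hb.
have c0 : 0 < c by lra.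
have kpos : 1 <= k%:R :> R by rewrite ler1n.
have ek : 0 < eP p k by rewrite /eP divr_gt0 ?ltr0n ?fact_gt0 // poch_gt0.
have ek1 : eP p k.+1 = eP p k * ((p + k%:R) / k.+1%:R).
  by rewrite mulrA -ePS mulfK // pnatr_eq0.
rewrite cf_ratio // ek1.
have -> : `|cf a b c k| * ((a + k%:R) * (b + k%:R) / ((c + k%:R) * k.+1%:R)) /
   (eP p k * ((p + k%:R) / k.+1%:R)) =
   `|cf a b c k| / eP p k * ((a + k%:R) * (b + k%:R) / ((c + k%:R) * (p + k%:R))).
  have h1 : eP p k != 0 by rewrite gt_eqF.
  have h2 : c + k%:R != 0 by rewrite gt_eqF //; lra.
  have h3 : p + k%:R != 0 by rewrite gt_eqF //; lra.
  have h4 : 1 + k%:R != 0 :> R by rewrite addrC natr1 pnatr_eq0.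
  by field; rewrite h3 h2 h1 h4.
rewrite ler_wpM2l ?divr_ge0 ?(ltW ek) //; first exact: (ltW (poch_gt0 p k p0)).
move: kpos ha hb; set k' := (k%:R : R) => kpos ha hb.
have Q0 : 0 < (c + k') * (p + k') by rewrite mulr_gt0 //; lra.
have kk : 0 < k' * (k' + 1) by rewrite mulr_gt0 //; lra.
have hQ : k' * (k' + 1) <= (c + k') * (p + k') by nra.
rewrite ler_pdivrMr //.
have -> : (a + k') * (b + k') = (c + k') * (p + k') + (a * b - c * p).
  have -> : b = c + p - a by lra.
  ring.
have hD : `|a * b - c * p| <= `|a * b - c * p| / (k' * (k' + 1)) * ((c + k') * (p + k')).
  by rewrite mulrAC ler_pdivlMr // ler_wpM2l.
have hd := ler_norm (a * b - c * p).
move: hD hd; set D := `|a * b - c * p|; set u := D / (k' * (k' + 1)); set Q := (c + k') * (p + k').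
move=> hD hd; nra.
Qed.
Lemma ratio_Q (a b c q : R) k : a + b = c - q -> 1 <= c -> 0 <= q -> (1 <= k)%N ->
  0 <= a + k%:R -> 0 <= b + k%:R ->
  `|cf a b c k.+1| / eQ q k.+1 <=
  `|cf a b c k| / eQ q k * (1 + (`|(c - q) * (2 + q) + a * b - 2 * c - 1| + `|a * b * (2 + q) - c|)
      / (k%:R * (k%:R + 1))).
Proof.
move=> hab c1 q0 k1 ha hb.
have c0 : 0 < c by lra.
have kpos : 1 <= k%:R :> R by rewrite ler1n.
have ek := eQ_gt0 q k q0.

have ek1 : eQ q k.+1 = eQ q k * (k.+1%:R / (1 + q + k.+1%:R)).
  have h1 : poch (1 + q) k != 0 by rewrite gt_eqF // poch_gt0 //; lra.
  have h2 : 1 + q + k%:R != 0 by rewrite gt_eqF //; lra.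
  have h3 : 1 + q + (1 + k%:R) != 0 by rewrite gt_eqF //; lra.
  have h4 : (k`!)%:R != 0 :> R by rewrite pnatr_eq0 -lt0n fact_gt0.
  rewrite /eQ !pochS factS natrM -natr1.
  by field; side_nz.
rewrite cf_ratio // ek1.
have -> : `|cf a b c k| * ((a + k%:R) * (b + k%:R) / ((c + k%:R) * k.+1%:R)) /
   (eQ q k * (k.+1%:R / (1 + q + k.+1%:R))) =
   `|cf a b c k| / eQ q k * ((a + k%:R) * (b + k%:R) * (2 + q + k%:R)
       / ((c + k%:R) * (k%:R + 1) * (k%:R + 1))).
  have h1 : eQ q k != 0 by rewrite gt_eqF.
  have h2 : c + k%:R != 0 by rewrite gt_eqF //; lra.
  have h3 : 1 + q + (k%:R + 1) != 0 by rewrite gt_eqF //; lra.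
  have h4 : 1 + k%:R != 0 :> R by rewrite gt_eqF //; lra.
  have h5 : k%:R + 1 != 0 :> R by rewrite gt_eqF //; lra.
  rewrite -natr1.
  by field; side_nz.
rewrite ler_wpM2l ?divr_ge0 ?(ltW ek) //; first by rewrite ltW // poch_gt0 //; lra.
move: kpos ha hb; set k' := (k%:R : R) => kpos ha hb.
set L := (c - q) * (2 + q) + a * b - 2 * c - 1.
set M := a * b * (2 + q) - c.
have Q0 : 0 < (c + k') * (k' + 1) * (k' + 1) by rewrite !mulr_gt0 //; lra.
have kk : 0 < k' * (k' + 1) by rewrite mulr_gt0 //; lra.
rewrite ler_pdivrMr //.
have -> : (a + k') * (b + k') * (2 + q + k') = (c + k') * (k' + 1) * (k' + 1) + (L * k' + M).
  rewrite /L /M.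
  have -> : b = c - q - a by lra.
  ring.
have hQ : k' * (k' + 1) * (k' + 1) <= (c + k') * (k' + 1) * (k' + 1).
  by rewrite ler_wpM2r ?ler_wpM2r //; lra.
have hD : (`|L| + `|M|) * (k' + 1) <=
    (`|L| + `|M|) / (k' * (k' + 1)) * ((c + k') * (k' + 1) * (k' + 1)).
  rewrite mulrAC ler_pdivlMr //.
  have hD0 : 0 <= `|L| + `|M| by rewrite addr_ge0.
  move: hD0 hQ; set D := `|L| + `|M|; set Q := (c + k') * (k' + 1) * (k' + 1) => hD0 hQ.
  nra.
have hL := ler_norm L.
have hM := ler_norm M.
have hLk : L * k' <= `|L| * k' by rewrite ler_wpM2r //; lra.
have hMk : 0 <= `|M| * k' by rewrite mulr_ge0 //; lra.
move: hD; set u := (`|L| + `|M|) / (k' * (k' + 1)); set Q := (c + k') * (k' + 1) * (k' + 1).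
move=> hD.
have hL0 : 0 <= `|L| by [].
rewrite [X in _ <= X]mulrDl mul1r.
lra.
Qed.
Lemma series_bound (u e : nat -> R) (M B x : R) :
  (forall k, `|u k| <= M * (e k * x ^+ k)) ->
  (forall N, \sum_(k < N) e k * x ^+ k <= B) -> 0 <= M ->
  limn (series u) <= M * B.
Proof.
move=> hu hB M0.
have hsum N : \sum_(k < N) `|u k| <= M * B.
  apply: le_trans (ler_wpM2l M0 (hB N)).
  rewrite mulr_sumr; apply: ler_sum => k _; exact: hu.
have cv : cvgn (series u).
  apply: normed_cvg.
  apply: nondecreasing_is_cvgn.
    by apply: nondecreasing_series => k _ /=.
  exists (M * B) => _ [n _ <-].
  change (series (fun k => `|u k|) n <= M * B).
  by rewrite seriesEord /=; apply: hsum.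
apply: limr_le => //; near=> n.
rewrite seriesEord /=; apply: le_trans (hsum n).
apply: le_trans (ler_norm _) _; exact: ler_norm_sum.
Unshelve. all: by end_near.
Qed.
Lemma K0_prop (a b : R) k : ((Num.trunc (`|a| + `|b|)).+1 <= k)%N ->
  [/\ (1 <= k)%N, 0 <= a + k%:R & 0 <= b + k%:R].
Proof.
move=> hk; split; first exact: leq_trans hk.
- have h1 := truncnS_gt (`|a| + `|b|).
  have h2 : ((Num.trunc (`|a| + `|b|)).+1%:R : R) <= k%:R by rewrite ler_nat.
  have h3 := ler_norm (- a); rewrite normrN in h3.
  have h4 := normr_ge0 b.
  lra.
- have h1 := truncnS_gt (`|a| + `|b|).
  have h2 : ((Num.trunc (`|a| + `|b|)).+1%:R : R) <= k%:R by rewrite ler_nat.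
  have h3 := ler_norm (- b); rewrite normrN in h3.
  have h4 := normr_ge0 a.
  lra.
Qed.

Lemma domP (a b c p : R) : a + b = c + p -> 1 <= c -> 0 < p ->
  exists M, 0 <= M /\ forall k, `|cf a b c k| <= M * eP p k.
Proof.
move=> hab c1 p0.
apply: (@dominate (cf a b c) (eP p) (Num.trunc (`|a| + `|b|)).+1 `|a * b - c * p|).
- by move=> k; rewrite /eP divr_gt0 ?ltr0n ?fact_gt0 // poch_gt0.
- exact: normr_ge0.
- by [].
- move=> k /K0_prop [k1 ha hb]; exact: ratio_P.
Qed.

Lemma domQ (a b c q : R) : a + b = c - q -> 1 <= c -> 0 <= q ->
  exists M, 0 <= M /\ forall k, `|cf a b c k| <= M * eQ q k.
Proof.
move=> hab c1 q0.
apply: (@dominate (cf a b c) (eQ q) (Num.trunc (`|a| + `|b|)).+1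
   (`|(c - q) * (2 + q) + a * b - 2 * c - 1| + `|a * b * (2 + q) - c|)).
- by move=> k; apply: eQ_gt0.
- by rewrite addr_ge0.
- by [].
- move=> k /K0_prop [k1 ha hb]; exact: ratio_Q.
Qed.

Lemma poch1 k : poch (1 : R) k = (k`!)%:R.
Proof.
elim: k => [|k IH]; first by rewrite /poch big_ord0 fact0.
by rewrite pochS IH factS natrM mulrC addrC natr1.
Qed.

Lemma eQ0 k : eQ 0 k = (k.+1%:R)^-1 :> R.
Proof.
rewrite /eQ addr0 poch1 factS natrM.
have h : (k`!)%:R != 0 :> R by rewrite pnatr_eq0 -lt0n fact_gt0.
have h2 : k.+1%:R != 0 :> R by rewrite pnatr_eq0.
by field; side_nz.
Qed.
Lemma Gamma_ge0 (s : R) : 0 <= Gamma s.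
Proof.
rewrite /Gamma /Rintegral; apply: fine_ge0; apply: integral_ge0 => t _.
by rewrite lee_fin mulr_ge0 ?powR_ge0 ?expR_ge0.
Qed.

Lemma onepow (r s : R) : 0 <= r -> r <= 1 -> (1 + r) `^ s <= 1 + 2 `^ s.
Proof.
move=> r0 r1.
have [s0|s0] := leP 0 s.
  have h : (1 + r) `^ s <= 2 `^ s by apply: ge0_ler_powR => //; rewrite ?nnegrE; lra.
  have := powR_ge0 (1 : R) s; lra.
have h : (1 + r) `^ s <= 1.
  rewrite -[X in _ <= X](powRr0 (1 + r)); apply: ler_powR; lra.
have := powR_ge0 (2 : R) s; lra.
Qed.

Lemma factor (r s : R) : 0 <= r -> r <= 1 ->
  (1 - r ^+ 2) `^ s = (1 - r) `^ s * (1 + r) `^ s.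
Proof.
move=> r0 r1; rewrite -powRM; last (by lra); last by lra.
by congr (_ `^ _); ring.
Qed.
End S.

Local Close Scope classical_set_scope.

Theorem lemma2p7 (R : realType) (n : nat) (alpha beta : R) :
  (3 <= n)%N ->
  0 <= beta ->
  0 < alpha + beta ->
  alpha + beta < n%:R - beta ->
  (n%:R - alpha - 2 * beta) / (2 * n%:R) + (n%:R - alpha) / (2 * (n%:R - 1)) < 1 ->
  exists C : R, 0 < C /\ exists delta : R, 0 < delta /\
    forall xi : 'rV[R]_n,
      enorm xi < 1 -> 1 - delta < enorm xi ->
      d_ab n alpha beta xi <=
        C * (if 1 < alpha then (1 - enorm xi) `^ beta
             else if alpha == 1 then (1 - enorm xi) `^ beta * ln (1 / (1 - enorm xi))
             else (1 - enorm xi) `^ (alpha + beta - 1)).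
Proof.
move=> n3 b0 ab0 abn hcond.
set a := (n%:R + alpha) / 2 - 1.
set b := alpha / 2.
set c := (n%:R / 2 : R).
set Kp := pi `^ (n%:R / 2) * 2 `^ (1 - beta) / Gamma (n%:R / 2 : R).
have n3' : (3 : R) <= n%:R by rewrite (ler_nat R 3 n).
have c1 : 1 <= c by rewrite /c; lra.
have Kp0 : 0 <= Kp by rewrite /Kp divr_ge0 ?mulr_ge0 ?powR_ge0 ?Gamma_ge0.
have dE : forall xi : 'rV[R]_n, d_ab n alpha beta xi =
    Kp * (1 - enorm xi ^+ 2) `^ (alpha + beta - 1) * hypF a b c (enorm xi ^+ 2).
  by move=> xi.
have hyp_cf : forall x, hypF a b c x = limn (series (fun k => cf a b c k * x ^+ k)).
  by move=> x.
have enorm0 : forall xi : 'rV[R]_n, 0 <= enorm xi by move=> xi; apply: sqrtr_ge0.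
case: (boolP (1 < alpha)) => ha1.
  set p := alpha - 1.
  have p0 : 0 < p by rewrite /p; lra.
  have hab : a + b = c + p by rewrite /a /b /c /p; field.
  have [M [M0 hM]] := domP _ _ _ _ hab c1 p0.
  exists (Kp * M * 2 `^ beta + 1); split.
    by have := mulr_ge0 (mulr_ge0 Kp0 M0) (powR_ge0 2 beta); lra.
  exists (1 / 2); split; first by lra.
  move=> xi r1 rgt.
  rewrite dE.
  have r0 := enorm0 xi.
  move: r1 rgt r0; set r := enorm xi => r1 rgt r0.
  set x := r ^+ 2.
  have x0 : 0 <= x by rewrite /x exprn_ge0.
  have x1 : x < 1 by rewrite /x; nra.
  have hF : hypF a b c x <= M * (1 - x) `^ (- p).
    rewrite hyp_cf; apply: (series_bound _ (eP p) M _ x) => [k|N|//].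
      rewrite normrM (ger0_norm (exprn_ge0 _ x0)) mulrA.
      exact: (ler_wpM2r (exprn_ge0 _ x0) (hM k)).
    exact: PS_bound.
  have P0 : 0 <= (1 - x) `^ (alpha + beta - 1) := powR_ge0 _ _.
  apply: le_trans (ler_wpM2l (mulr_ge0 Kp0 P0) hF) _.
  have e1 : (1 - x) `^ (alpha + beta - 1) * (1 - x) `^ (- p) = (1 - x) `^ beta.
    rewrite -powRD; first by congr (_ `^ _); rewrite /p; ring.
    by apply/implyP => _; rewrite gt_eqF //; lra.
  have e2 : (1 - x) `^ beta <= (1 - r) `^ beta * 2 `^ beta.
    rewrite /x factor //; last lra.
    apply: (ler_wpM2l (powR_ge0 _ _)).
    by apply: ge0_ler_powR => //; rewrite ?nnegrE; lra.
  have -> : Kp * (1 - x) `^ (alpha + beta - 1) * (M * (1 - x) `^ (- p)) =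
      Kp * M * ((1 - x) `^ (alpha + beta - 1) * (1 - x) `^ (- p)) by ring.
  rewrite e1.
  apply: le_trans (ler_wpM2l (mulr_ge0 Kp0 M0) e2) _.
  have g0 := powR_ge0 (1 - r) beta.
  have -> : Kp * M * ((1 - r) `^ beta * 2 `^ beta) = Kp * M * 2 `^ beta * (1 - r) `^ beta by ring.
  rewrite mulrDl mul1r; lra.
have ha1' : alpha <= 1 by rewrite leNgt.
case: (eqVneq alpha 1) => [ha|ha].
  have hab : a + b = c - 0 by rewrite /a /b /c ha; field.
  have [M [M0 hM]] := domQ _ _ _ _ hab c1 (lexx 0).
  exists (Kp * M * 2 `^ beta * 4 + 1); split.
    by have := mulr_ge0 (mulr_ge0 Kp0 M0) (powR_ge0 2 beta); lra.
  exists (1 / 2); split; first by lra.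
  move=> xi r1 rgt.
  rewrite dE.
  have r0 := enorm0 xi.
  move: r1 rgt r0; set r := enorm xi => r1 rgt r0.
  set x := r ^+ 2.
  have x0 : 0 < x by rewrite /x; nra.
  have x1 : x < 1 by rewrite /x; nra.
  have xr : x <= r by rewrite /x; nra.
  have x4 : 1 <= 4 * x by rewrite /x; nra.
  set L := - ln (1 - x).
  set Lr := ln (1 / (1 - r)).
  have hL0 : 0 <= L by rewrite /L oppr_ge0 ln_le0 //; lra.
  have hLr : L <= Lr.
    rewrite /L /Lr -lnV ?posrE; last by lra.
    rewrite ler_ln ?posrE ?invr_gt0 ?divr_gt0 //; try lra.
    by rewrite div1r lef_pV2 ?posrE; lra.
  have hx4 : x^-1 <= 4 by rewrite -div1r ler_pdivrMr //; lra.
  have hF : hypF a b c x <= M * (4 * Lr).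
    apply: le_trans (_ : M * (L * x^-1) <= _); last first.
      apply: (ler_wpM2l M0); rewrite mulrC.
      by apply: ler_pM => //; rewrite invr_ge0 ltW.
    rewrite hyp_cf; apply: (series_bound _ (eQ 0) M _ x) => [k|N|//].
      rewrite normrM (ger0_norm (exprn_ge0 _ (ltW x0))) mulrA.
      exact: (ler_wpM2r (exprn_ge0 _ (ltW x0)) (hM k)).
    rewrite (eq_bigr (fun k : 'I_N => x^-1 * ((k.+1%:R)^-1 * x ^+ k.+1))); last first.
      move=> k _; rewrite eQ0 exprS.
      by rewrite mulrCA mulKf // gt_eqF.
    rewrite -mulr_sumr -/(LS N x) mulrC.
    by apply: ler_wpM2r; [rewrite invr_ge0 ltW | exact: LS_bound (ltW x0) x1].
  rewrite ha.
  have -> : 1 + beta - 1 = beta by ring.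
  have T0 : 0 <= (1 - x) `^ beta := powR_ge0 _ _.
  have hT : (1 - x) `^ beta <= (1 - r) `^ beta * 2 `^ beta.
    rewrite /x factor //; last lra.
    apply: (ler_wpM2l (powR_ge0 _ _)).
    by apply: ge0_ler_powR => //; rewrite ?nnegrE; lra.
  apply: le_trans (ler_wpM2l (mulr_ge0 Kp0 T0) hF) _.
  have Lr0 : 0 <= Lr by lra.
  have -> : Kp * (1 - x) `^ beta * (M * (4 * Lr)) = (Kp * M * 4 * Lr) * (1 - x) `^ beta by ring.
  have KM : 0 <= Kp * M * 4 * Lr.
    by apply: mulr_ge0 => //; apply: mulr_ge0; [exact: mulr_ge0 Kp0 M0 | lra].
  apply: le_trans (ler_wpM2l KM hT) _.
  have g0 := powR_ge0 (1 - r) beta.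
  have gL0 : 0 <= (1 - r) `^ beta * Lr by rewrite mulr_ge0.
  have -> : Kp * M * 4 * Lr * ((1 - r) `^ beta * 2 `^ beta) =
    (Kp * M * 2 `^ beta * 4) * ((1 - r) `^ beta * Lr) by ring.
  rewrite [X in _ <= X]mulrDl mul1r; lra.
have ha' : alpha < 1 by rewrite lt_neqAle ha ha1'.
set q := 1 - alpha.
have q0 : 0 < q by rewrite /q; lra.
have hab : a + b = c - q by rewrite /a /b /c /q; field.
have [M [M0 hM]] := domQ _ _ _ _ hab c1 (ltW q0).
set s := alpha + beta - 1.
exists (Kp * M * q^-1 * (1 + 2 `^ s) + 1); split.
  have qi : 0 < q^-1 by rewrite invr_gt0.
  have := mulr_ge0 (mulr_ge0 (mulr_ge0 Kp0 M0) (ltW qi))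
     (addr_ge0 ler01 (powR_ge0 2 s)); lra.
exists (1 / 2); split; first by lra.
move=> xi r1 rgt.
rewrite dE.
have r0 := enorm0 xi.
move: r1 rgt r0; set r := enorm xi => r1 rgt r0.
set x := r ^+ 2.
have x0 : 0 <= x by rewrite /x exprn_ge0.
have x1 : x < 1 by rewrite /x; nra.
have hF : hypF a b c x <= M * q^-1.
  rewrite hyp_cf; apply: (series_bound _ (eQ q) M _ x) => [k|N|//].
    rewrite normrM (ger0_norm (exprn_ge0 _ x0)) mulrA.
    exact: (ler_wpM2r (exprn_ge0 _ x0) (hM k)).
  apply: le_trans (eQ_sum q N q0).
  apply: ler_sum => k _.
  rewrite -[X in _ <= X]mulr1; apply: (ler_wpM2l (ltW (eQ_gt0 q k (ltW q0)))).
  by rewrite exprn_ile1 // ltW.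
have P0 : 0 <= (1 - x) `^ s := powR_ge0 _ _.
have hP : (1 - x) `^ s <= (1 - r) `^ s * (1 + 2 `^ s).
  rewrite /x factor //; last lra.
  apply: (ler_wpM2l (powR_ge0 _ _)).
  by apply: onepow; lra.
apply: le_trans (ler_wpM2l (mulr_ge0 Kp0 P0) hF) _.
have qi0 : 0 <= q^-1 by rewrite invr_ge0 ltW.
have -> : Kp * (1 - x) `^ s * (M * q^-1) = (Kp * M * q^-1) * (1 - x) `^ s by ring.
have KM : 0 <= Kp * M * q^-1 by apply: mulr_ge0 => //; exact: mulr_ge0 Kp0 M0.
apply: le_trans (ler_wpM2l KM hP) _.
have g0 := powR_ge0 (1 - r) s.
have -> : Kp * M * q^-1 * ((1 - r) `^ s * (1 + 2 `^ s)) =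
  (Kp * M * q^-1 * (1 + 2 `^ s)) * (1 - r) `^ s by ring.
rewrite [X in _ <= X]mulrDl mul1r; lra.
Qed.
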